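(* Let $p$ be an odd prime, $q\in\mathbb{C}_p$ with $|q-1|_p<1$, $\alpha\in\mathbb{N}\cup\{0\}$, $h\in\mathbb{N}$. For every integer $n\ge0$, \[ \int_{\mathbb{Z}_p}q^{(h-1)(\xi+1)}[1-\xi]_{q^{-\alpha}}^n\,d\mu_{-q}(\xi)=\frac{\widetilde{G}_{n+1,q^{-1}}^{(\alpha,h)}(2)}{n+1}. \]
   Context: For $x\in\mathbb{Z}_p$ write $[x]_q=\frac{1-q^x}{1-q}$. For a uniformly differentiable $f:\mathbb{Z}_p\to\mathbb{C}_p$, the fermionic $p$-adic $q$-integral is $\int_{\mathbb{Z}_p}f(\xi)\,d\mu_{-q}(\xi)=\lim_{N\to\infty}\frac{1}{[p^N]_{-q}}\sum_{\xi=0}^{p^N-1}f(\xi)(-q)^{\xi}$, with $[p^N]_{-q}=\frac{1+q^{p^N}}{1+q}$. The $(h,q)$-Genocchi polynomials with weight $\alpha$ are defined for $n\ge0$, $x\in\mathbb{Z}_p$ by $\frac{\widetilde{G}_{n+1,q}^{(\alpha,h)}(x)}{n+1}=\int_{\mathbb{Z}_p}q^{(h-1)\xi}[x+\xi]_{q^{\alpha}}^n\,d\mu_{-q}(\xi)$. The version with $q^{-1}$ is obtained by replacing $q$ by $q^{-1}$ everywhere: $\frac{\widetilde{G}_{n+1,q^{-1}}^{(\alpha,h)}(x)}{n+1}=\int_{\mathbb{Z}_p}q^{(1-h)\xi}[x+\xi]_{q^{-\alpha}}^n\,d\mu_{-q^{-1}}(\xi)$. *)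

(* Defs.v *)
(* C_p is modelled abstractly. *)
From HB Require Import structures.
From mathcomp Require Import all_boot all_order all_algebra.
From mathcomp Require Import reals.
Set Implicit Arguments. Unset Strict Implicit. Unset Printing Implicit Defensive.
Import Order.TTheory GRing.Theory Num.Theory.
Local Open Scope ring_scope.

Section Defs.
Variables (R : realType) (K : fieldType) (abs : K -> R).

Definition padic_abs (p : nat) : Prop :=
  [/\ forall x, abs x = 0 <-> x = 0,
      forall x y, abs (x * y) = abs x * abs y,
      forall x y, abs (x + y) <= Num.max (abs x) (abs y)
    & forall n : nat, (0 < n)%N -> abs n%:R = (p%:R ^- (logn p n) : R)].

Definition converges_to (u : nat -> K) (L : K) : Prop :=
  forall e : R, 0 < e -> exists N : nat, forall m, (N <= m)%N -> abs (u m - L) < e.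

Definition cauchy (u : nat -> K) : Prop :=
  forall e : R, 0 < e -> exists N : nat,
    forall m k, (N <= m)%N -> (N <= k)%N -> abs (u m - u k) < e.

Definition complete_abs : Prop :=
  forall u : nat -> K, cauchy u -> exists L, converges_to u L.

(* [x]_q = (1 - q^x)/(1 - q), with the standard convention [x]_1 = x *)
Definition qnum (q : K) (x : int) : K :=
  if q == 1 then x%:~R else (1 - q ^ x) / (1 - q).

(* Riemann sums of the fermionic p-adic q-integral *)
Definition ferm_sum (p : nat) (q : K) (f : int -> K) (N : nat) : K :=
  (qnum (- q) (p ^ N)%N)^-1 * \sum_(0 <= xi < p ^ N) f xi%:Z * (- q) ^+ xi.

Definition fermionic_integral_is (p : nat) (q : K) (f : int -> K) (L : K) : Prop :=
  converges_to (ferm_sum p q f) L.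

(* G = \widetilde{G}^{(alpha,h)}_{n+1,q}(x), i.e.
   G/(n+1) = \int_{Z_p} q^{(h-1)xi} [x+xi]_{q^alpha}^n d\mu_{-q}(xi) *)
Definition qGenocchi_is (p : nat) (q : K) (alpha h n : nat) (x : int) (G : K) : Prop :=
  fermionic_integral_is p q
    (fun xi => q ^ ((h%:Z - 1) * xi) * (qnum (q ^+ alpha) (x + xi)) ^+ n)
    (G / (n.+1)%:R).

End Defs.

(* Main.v *)
Require Import Defs.
From HB Require Import structures.
From mathcomp Require Import all_boot all_order all_algebra.
From mathcomp Require Import reals.
From mathcomp Require Import ring lra zify.
Import Order.TTheory GRing.Theory Num.Theory.
Local Open Scope ring_scope.

Lemma geo_small (R : realType) (r e : R) : 0 <= r -> r < 1 -> 0 < e ->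
  exists N : nat, r ^+ N < e.
Proof.
move=> r0 r1 e0.
have [->|rn0] := eqVneq r 0; first by exists 1%N; rewrite expr1.
have rp : 0 < r by rewrite lt_def rn0 r0.
set t := r^-1 - 1.
have tp : 0 < t by rewrite /t subr_gt0 invf_gt1.
have rt : r^-1 = 1 + t by rewrite /t addrC subrK.
have bern : forall N : nat, 1 + N%:R * t <= (1 + t) ^+ N.
  elim=> [|N IH]; first by rewrite mul0r addr0 expr0.
  rewrite exprS -natr1.
  have h0 : 0 <= N%:R * t by rewrite mulr_ge0 ?ler0n ?ltW.
  nra.
set N := Num.Def.archi_bound ((e * t)^-1).
exists N.
have et : 0 < e * t by rewrite mulr_gt0.
have hN : (e * t)^-1 < N%:R by apply: archi_boundP; rewrite invr_ge0 ltW.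
have hb := bern N; rewrite -rt exprVn in hb.
have rNp : 0 < r ^+ N by rewrite exprn_gt0.
have h1 : 1 < N%:R * (e*t).
  by rewrite -(ltr_pM2r et) mulVf ?lt0r_neq0 in hN.
have ha : r ^+ N * (r ^+ N)^-1 = 1 by rewrite mulfV ?gt_eqF.
set a := (r ^+ N)^-1 in hb ha.
set b := r ^+ N in ha rNp *.
have hN0 : 0 <= N%:R :> R by rewrite ler0n.
have h3 : 1 < e * a.
  have : e * (1 + N%:R * t) <= e * a by rewrite ler_pM2l.
  nra.
have : b * 1 < b * (e * a) by rewrite ltr_pM2l.
nra.
Qed.

Lemma sum_split (V : nmodType) (F : nat -> V) k M :
  \sum_(0 <= i < k * M) F i = \sum_(0 <= j < k) \sum_(0 <= a < M) F (a + j * M)%N.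
Proof.
elim: k => [|k IH]; first by rewrite mul0n !big_geq.
rewrite big_nat_recr //= -IH (big_cat_nat _ (n := k * M)) //=; last by rewrite mulSn leq_addl.
congr (_ + _).
rewrite -{1}[(k * M)%N]add0n big_addn mulSn addnK.
by apply: eq_bigr.
Qed.

Section Padic.
Variables (R : realType) (K : closedFieldType) (abs : K -> R) (p : nat).
Hypotheses (hp : prime p) (hodd : odd p) (habs : padic_abs abs p).

Lemma abs0 : abs 0 = 0.
Proof. by case: habs => H _ _ _; exact: (proj2 (H 0)). Qed.

Lemma absM x y : abs (x * y) = abs x * abs y.
Proof. by case: habs. Qed.

Lemma absD x y : abs (x + y) <= Num.max (abs x) (abs y).
Proof. by case: habs. Qed.

Lemma abs_eq0 x : abs x = 0 -> x = 0.
Proof. by case: habs => H _ _ _; exact: (proj1 (H x)). Qed.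

Lemma abs_ge0 x : 0 <= abs x.
Proof.
have [y hy] := @GRing.solve_monicpoly K 2 (fun i => if i == 0%N then x else 0) isT.
rewrite big_ord_recr big_ord1 /= mul0r addr0 expr0 mulr1 in hy.
by rewrite -hy absM -expr2 sqr_ge0.
Qed.

Lemma abs1 : abs 1 = 1.
Proof.
have h : abs 1 = abs 1 * abs 1 by rewrite -absM mulr1.
have h0 : abs 1 != 0 by apply/eqP => /abs_eq0/eqP; rewrite oner_eq0.
by apply: (mulfI h0); rewrite -h mulr1.
Qed.

Lemma absN x : abs (- x) = abs x.
Proof.
have hm : abs (-1) = 1.
  have h : abs (-1) * abs (-1) = 1 by rewrite -absM mulrNN mulr1 abs1.
  have g := abs_ge0 (-1). nra.
by rewrite -mulN1r absM hm mul1r.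
Qed.

Lemma absB x y : abs (x - y) <= Num.max (abs x) (abs y).
Proof. by rewrite -(absN y) absD. Qed.

Lemma absV x : abs (x^-1) = (abs x)^-1.
Proof.
have [->|x0] := eqVneq x 0; first by rewrite invr0 abs0 invr0.
have h : abs x * abs x^-1 = 1 by rewrite -absM mulfV // abs1.
have hx : abs x != 0 by apply/eqP => /abs_eq0/eqP; rewrite (negbTE x0).
by rewrite -[abs x^-1]mul1r -(mulVf hx) -mulrA h mulr1.
Qed.

Lemma absX x n : abs (x ^+ n) = abs x ^+ n.
Proof. by elim: n => [|n IH]; rewrite ?expr0 ?abs1 // !exprS absM IH. Qed.

Lemma abs_nat n : (0 < n)%N -> abs n%:R = (p%:R ^- (logn p n) : R).
Proof. by case: habs => _ _ _ H; apply: H. Qed.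

Lemma p_gt1 : (1 < p)%N. Proof. exact: prime_gt1. Qed.

Lemma abs_nat_le1 n : abs n%:R <= 1.
Proof.
case: n => [|n]; first by rewrite abs0.
rewrite abs_nat // -exprVn exprn_ile1 // ?invr_ge0 ?ler0n // invf_le1 ?ltr0n ?ler1n ?prime_gt0 //.
Qed.

Lemma abs_int_le1 (z : int) : abs z%:~R <= 1.
Proof. by case: z => n; rewrite ?NegzE ?mulrNz ?absN abs_nat_le1. Qed.

Lemma abs_pN N : abs (p ^ N)%:R = p%:R ^- N :> R.
Proof. by rewrite abs_nat ?expn_gt0 ?prime_gt0 // pfactorK. Qed.

Lemma abs2 : abs 2 = 1.
Proof.
rewrite abs_nat // lognE /=.
suff -> : (p %| 2)%N = false by rewrite andbF expr0 invr1.
apply/negbTE/negP => /(dvdn_leq (isT : (0 < 2)%N)); rewrite leq_eqVlt ltnS => /orP [/eqP p2|].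
  by move: hodd; rewrite p2.
by rewrite leqNgt prime_gt1.
Qed.

Lemma abs_sum (I : Type) (r : seq I) (P : pred I) (F : I -> K) (B : R) :
  0 <= B -> (forall i, P i -> abs (F i) <= B) -> abs (\sum_(i <- r | P i) F i) <= B.
Proof.
move=> B0 H; apply: (big_ind (fun x => abs x <= B)) => //; first by rewrite abs0.
by move=> x y hx hy; apply: le_trans (absD x y) _; rewrite ge_max hx hy.
Qed.


Lemma ultra_eq x y : abs y < abs x -> abs (x + y) = abs x.
Proof.
move=> h; apply/eqP; rewrite eq_le; apply/andP; split.
  by apply: le_trans (absD x y) _; rewrite ge_max lexx ltW.
have := absB (x + y) y; rewrite addrK le_max => /orP [//|h2].
by have := lt_le_trans h h2; rewrite ltxx.
Qed.

Lemma abs_unit Q : abs (Q - 1) < 1 -> abs Q = 1.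
Proof. by move=> h; rewrite -[Q](addrNK 1) addrC ultra_eq abs1. Qed.

Lemma unit_neq0 Q : abs (Q - 1) < 1 -> Q != 0.
Proof. by move=> /abs_unit h; apply/eqP => Q0; move: h; rewrite Q0 abs0 => /eqP; rewrite eq_sym oner_eq0. Qed.

Lemma abs1pQ Q : abs (Q - 1) < 1 -> abs (1 + Q) = 1.
Proof.
move=> h; have -> : 1 + Q = 2 + (Q - 1) by ring.
by rewrite ultra_eq abs2.
Qed.

Lemma absXz1 Q (z : int) : abs Q = 1 -> abs (Q ^ z) = 1.
Proof.
case: z => n hq; first by rewrite absX hq expr1n.
by rewrite NegzE -exprnN absV absX hq expr1n invr1.
Qed.

Lemma absXn1 Q (n : nat) : abs (Q - 1) < 1 -> abs (Q ^+ n - 1) <= abs (Q - 1).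
Proof.
move=> h; rewrite subrX1 absM -[X in _ <= X]mulr1 ler_wpM2l ?abs_ge0 //.
apply: abs_sum => // i _; by rewrite absX abs_unit ?expr1n.
Qed.

Lemma absXz1' Q (z : int) : abs (Q - 1) < 1 -> abs (Q ^ z - 1) <= abs (Q - 1).
Proof.
case: z => n h; first exact: absXn1.
rewrite NegzE -exprnN.
have Qn0 : Q ^+ n.+1 != 0 by rewrite expf_neq0 // unit_neq0.
have -> : (Q ^+ n.+1)^-1 - 1 = - (Q ^+ n.+1)^-1 * (Q ^+ n.+1 - 1).
  by rewrite mulNr mulrBr mulVf // mulr1 opprB.
by rewrite absM absN absV absX abs_unit // expr1n invr1 mul1r absXn1.
Qed.

Lemma pow_step Q : abs (Q - 1) < 1 ->
  abs (Q ^+ p - 1) <= abs (Q - 1) * Num.max (p%:R^-1) (abs (Q - 1)).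
Proof.
move=> h; rewrite subrX1 absM ler_wpM2l ?abs_ge0 //.
have -> : \sum_(i < p) Q ^+ i = p%:R + \sum_(i < p) (Q ^+ i - 1).
  by rewrite sumrB sumr_const card_ord addrC subrK.
apply: le_trans (absD _ _) _; rewrite ge_max; apply/andP; split.
  by have := abs_pN 1; rewrite expn1 expr1 => ->; rewrite le_max lexx.
apply: abs_sum => [|i _]; first by rewrite le_max abs_ge0 orbT.
by rewrite le_max absXn1 ?orbT.
Qed.


Lemma pow_pN Q s N : abs (Q - 1) <= s -> s < 1 ->
  abs (Q ^+ (p ^ N) - 1) <= (Num.max ((p%:R : R)^-1) s) ^+ N * abs (Q - 1).
Proof.
move=> hs s1; have h1 : abs (Q - 1) < 1 by apply: le_lt_trans hs s1.
elim: N => [|N IH]; first by rewrite expn0 expr1 expr0 mul1r.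
rewrite expnSr exprM.
have hQ' : abs (Q ^+ (p ^ N) - 1) < 1 by apply: le_lt_trans (absXn1 _ _ h1) h1.
apply: (le_trans (pow_step _ hQ')).
rewrite exprSr -mulrA [_ * abs (Q - 1)]mulrC mulrA.
apply: ler_pM => //; rewrite ?abs_ge0 //.
  by rewrite le_max invr_ge0 ler0n.
rewrite ge_max le_max lexx /= le_max; apply/orP; right.
exact: le_trans (absXn1 _ _ h1) hs.
Qed.

Lemma powz_pN Q s N (z : int) : abs (Q - 1) <= s -> s < 1 ->
  abs (Q ^ (z * (p ^ N)%N%:Z) - 1) <= (Num.max ((p%:R : R)^-1) s) ^+ N * abs (Q - 1).
Proof.
move=> hs s1; have h1 : abs (Q - 1) < 1 by apply: le_lt_trans hs s1.
rewrite mulrC -exprz_exp.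
have hQ' : abs (Q ^+ (p ^ N) - 1) < 1 by apply: le_lt_trans (absXn1 _ _ h1) h1.
apply: le_trans (absXz1' _ z hQ') _.
exact: pow_pN.
Qed.

Lemma qnum_le1 Q (x : int) : abs (Q - 1) < 1 -> abs (qnum Q x) <= 1.
Proof.
move=> h; rewrite /qnum; case: eqP => [_|/eqP Q1]; first exact: abs_int_le1.
have h0 : abs (1 - Q) != 0 by apply/eqP => /abs_eq0/eqP; rewrite subr_eq0 eq_sym (negbTE Q1).
rewrite absM absV -(absN (1 - Q)) opprB -(absN (1 - Q ^ x)) opprB.
rewrite -(absN (1 - Q)) opprB in h0.
rewrite ler_pdivrMr ?mul1r ?absXz1' // lt_def h0 abs_ge0 //.
Qed.

Lemma qnum_shift Q s N (x z : int) : abs (Q - 1) <= s -> s < 1 ->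
  abs (qnum Q (x + z * (p ^ N)%N%:Z) - qnum Q x) <= (Num.max ((p%:R : R)^-1) s) ^+ N.
Proof.
move=> hs s1; have h1 : abs (Q - 1) < 1 by apply: le_lt_trans hs s1.
rewrite /qnum; case: eqP => [_|/eqP Q1].
  rewrite intrD addrAC subrr add0r intrM absM.
  apply: (le_trans (ler_wpM2r (abs_ge0 _) (abs_int_le1 _))).
  rewrite mul1r -pmulrn abs_pN -exprVn.
  apply: lerXn2r; rewrite ?nnegrE ?invr_ge0 ?ler0n ?le_max ?lexx //.
  by rewrite (le_trans (abs_ge0 _) hs) orbT.
have Q0 : Q != 0 by apply: unit_neq0.
have h0 : abs (Q - 1) != 0 by apply/eqP => /abs_eq0/eqP; rewrite subr_eq0 (negbTE Q1).
have -> : (1 - Q ^ (x + z * (p ^ N)%N%:Z)) / (1 - Q) - (1 - Q ^ x) / (1 - Q)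
    = Q ^ x * (Q ^ (z * (p ^ N)%N%:Z) - 1) / (Q - 1).
  rewrite expfzDr // -mulrBl -[Q - 1]opprB invrN mulrN -mulNr; congr (_ * _).
  by rewrite mulrBr mulr1 !opprB addrCA addrA [_ + (1 - _)]addrCA addrAC subrr add0r.
have aQ := abs_unit _ h1.
rewrite absM absV absM (absXz1 _ _ aQ) mul1r.
rewrite ler_pdivrMr; last by rewrite lt_def h0 abs_ge0.
exact: powz_pN.
Qed.


Section Q.
Variable q : K.
Hypothesis hq : abs (q - 1) < 1.

Lemma absq : abs q = 1. Proof. exact: abs_unit. Qed.
Lemma absNq : abs (- q) = 1. Proof. by rewrite absN absq. Qed.
Lemma q_neq0 : q != 0. Proof. exact: unit_neq0. Qed.

Lemma negq_ne1 : - q != 1.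
Proof.
apply/eqP => h; move: hq; have -> : q = -1 by rewrite -h opprK.
by rewrite -opprD absN abs2 ltxx.
Qed.

Lemma c_eq (M : nat) : qnum (- q) M%:Z = (1 - (- q) ^+ M) / (1 + q).
Proof. by rewrite /qnum (negbTE negq_ne1) opprK. Qed.

Lemma negqM N : (- q) ^+ (p ^ N) = - q ^+ (p ^ N).
Proof. by rewrite exprNn -signr_odd oddX hodd orbT expr1 mulN1r. Qed.

Lemma abs_c N : abs (qnum (- q) (p ^ N)%N%:Z) = 1.
Proof.
have hM : abs (q ^+ (p ^ N) - 1) < 1 by exact: le_lt_trans (absXn1 _ _ hq) hq.
by rewrite c_eq negqM opprK absM absV (abs1pQ _ hq) (abs1pQ _ hM) invr1 mulr1.
Qed.

Lemma c_neq0 N : qnum (- q) (p ^ N)%N%:Z != 0.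
Proof. by apply/eqP => h; have := abs_c N; rewrite h abs0 => /eqP; rewrite eq_sym oner_eq0. Qed.

Lemma ferm_diff (f : int -> K) (B : R) N N' :
  (forall a j : nat, abs (f (a + j * p ^ N)%N%:Z - f a%:Z) <= B) -> 0 <= B -> (N <= N')%N ->
  abs (ferm_sum p q f N' - ferm_sum p q f N) <= B.
Proof.
move=> hf B0 NN'.
set M := (p ^ N)%N; set k := (p ^ (N' - N))%N.
have hk : (p ^ N' = k * M)%N by rewrite /k /M -expnD subnK.
set w := (- q) ^+ M.
set S := \sum_(0 <= a < M) f a%:Z * (- q) ^+ a.
set T := \sum_(0 <= j < k) w ^+ j.
set D := \sum_(0 <= j < k) \sum_(0 <= a < M) (f (a + j * M)%N%:Z - f a%:Z) * (- q) ^+ a * w ^+ j.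
have hsum : \sum_(0 <= xi < p ^ N') f xi%:Z * (- q) ^+ xi = T * S + D.
  rewrite hk sum_split /T /D big_distrl /= -big_split /=.
  apply: eq_bigr => j _; rewrite big_distrr /= -big_split /=.
  apply: eq_bigr => a _.
  by rewrite exprD mulnC exprM -/w; ring.
have hc : qnum (- q) (p ^ N')%N%:Z = qnum (- q) M%:Z * T.
  rewrite !c_eq hk mulnC exprM -/w mulrAC; congr (_ / _).
  by rewrite /T -opprB subrX1 -mulNr opprB big_mkord.
have cN := c_neq0 N; have cN' := c_neq0 N'.
have T0 : T != 0 by apply: contraNneq cN' => h; rewrite hc h mulr0.
rewrite /ferm_sum hsum hc -/M -/S invfM mulrDr [_ / T * (T * S)]mulrA -[_ / T * T]mulrA mulVf // mulr1 addrAC subrr add0r.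
rewrite absM -invfM -hc absV abs_c invr1 mul1r.
apply: abs_sum => // j _; apply: abs_sum => // a _.
have aw : abs w = 1 by rewrite /w absX absNq expr1n.
rewrite !absM (absX w) aw expr1n mulr1 absX absNq expr1n mulr1. exact: hf.
Qed.

Lemma ferm_conv (f : int -> K) (r : R) :
  0 <= r -> r < 1 ->
  (forall N (a j : nat), abs (f (a + j * p ^ N)%N%:Z - f a%:Z) <= r ^+ N) ->
  complete_abs abs -> exists L, fermionic_integral_is abs p q f L.
Proof.
move=> r0 r1 hf hc; apply: hc => e e0.
have [N0 hN0] := @geo_small _ r e r0 r1 e0.
exists N0 => m k hm hk.
have key : forall m k, (N0 <= m)%N -> (m <= k)%N -> abs (ferm_sum p q f m - ferm_sum p q f k) < e.
  move=> m' k' h1 h2; rewrite -absN opprB.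
  apply: (le_lt_trans (ferm_diff _ _ _ _ (hf m') _ h2)); first by rewrite exprn_ge0.
  apply: (le_lt_trans _ hN0); exact: (@ler_wiXn2l _ r r0 (ltW r1) _ _ h1).
case: (leqP m k) => h; first exact: key.
by rewrite -absN opprB; apply: key => //; exact: ltnW.
Qed.

End Q.

Lemma prod_bound (x y x' y' : K) (B : R) : abs y <= 1 -> abs x' <= 1 ->
  abs (x - x') <= B -> abs (y - y') <= B -> abs (x * y - x' * y') <= B.
Proof.
move=> hy hx' h1 h2.
have -> : x * y - x' * y' = (x - x') * y + x' * (y - y') by ring.
apply: (le_trans (absD _ _)); rewrite ge_max !absM; apply/andP; split.
  by apply: (le_trans _ h1); rewrite -[X in _ <= X]mulr1 ler_wpM2l ?abs_ge0.
by apply: (le_trans _ h2); rewrite -[X in _ <= X]mul1r ler_wpM2r ?abs_ge0.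
Qed.

Lemma pow_bound (x y : K) n : abs x <= 1 -> abs y <= 1 -> abs (x ^+ n - y ^+ n) <= abs (x - y).
Proof.
move=> hx hy; elim: n => [|n IH]; first by rewrite !expr0 subrr abs0 abs_ge0.
rewrite !exprSr; apply: prod_bound => //.
by rewrite absX exprn_ile1 ?abs_ge0.
Qed.

Section Main.
Variables (q : K) (alpha h n : nat).
Hypothesis hq : abs (q - 1) < 1.

Definition rr : R := Num.max ((p%:R : R)^-1) (abs (q - 1)).

Lemma rr_ge0 : 0 <= rr.
Proof. by rewrite /rr le_max invr_ge0 ler0n. Qed.

Lemma rr_lt1 : rr < 1.
Proof.
rewrite /rr gt_max hq andbT invf_lt1 ?ltr0n ?prime_gt0 //.
by rewrite ltr1n prime_gt1.
Qed.

Lemma q0 : q != 0. Proof. exact: unit_neq0. Qed.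

Lemma absqi : abs (q^-1 - 1) = abs (q - 1).
Proof.
have -> : q^-1 - 1 = q^-1 * (1 - q) by rewrite mulrBr mulr1 mulVf ?q0.
by rewrite absM absV (abs_unit _ hq) invr1 mul1r -absN opprB.
Qed.

Lemma hqi : abs (q^-1 - 1) < 1. Proof. by rewrite absqi. Qed.

Definition g (xi : int) : K :=
  q^-1 ^ ((h%:Z - 1) * xi) * qnum (q^-1 ^+ alpha) (2 + xi) ^+ n.

Lemma g_cont N (xi z : int) : abs (g (xi + z * (p ^ N)%N%:Z) - g xi) <= rr ^+ N.
Proof.
have hs : abs (q^-1 - 1) <= abs (q - 1) by rewrite absqi.
have hQ : abs (q^-1 ^+ alpha - 1) <= abs (q - 1) by rewrite -absqi absXn1 // hqi.
have hQ1 : abs (q^-1 ^+ alpha - 1) < 1 by apply: le_lt_trans hQ hq.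
have qi0 : q^-1 != 0 by rewrite invr_eq0 q0.
have aqi : abs (q^-1) = 1 by rewrite absV (abs_unit _ hq) invr1.
rewrite /g; apply: prod_bound.
- by rewrite absX exprn_ile1 ?abs_ge0 ?qnum_le1.
- by rewrite absXz1.
- rewrite mulrDr mulrA expfzDr // -[X in _ - X]mulr1 -mulrBr absM absXz1 // mul1r.
  apply: (le_trans (powz_pN _ _ _ _ hs hq)).
  by rewrite -[X in _ <= X]mulr1 ler_wpM2l ?exprn_ge0 ?rr_ge0 // ltW // hqi.
  apply: (le_trans (pow_bound _ _ _ (qnum_le1 _ _ hQ1) (qnum_le1 _ _ hQ1))).
  by rewrite addrA; apply: qnum_shift.
Qed.

Definition f2 (xi : int) : K :=
  q ^ ((h%:Z - 1) * (xi + 1)) * qnum (q ^- alpha) (1 - xi) ^+ n.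

Lemma f2_rev (M i : nat) : (i < M)%N -> f2 (M - i.+1)%N%:Z = g (i%:Z + (-1) * M%:Z).
Proof.
move=> hi; rewrite /f2 /g exprVn exprz_inv.
have -> : (M - i.+1)%N%:Z = M%:Z - i%:Z - 1 by lia.
congr (q ^ _ * qnum _ _ ^+ n); ring.
Qed.

Lemma c_rel (M : nat) : odd M -> (qnum (- q) M%:Z)^-1 * (- q) ^+ M.-1 = (qnum (- q^-1) M%:Z)^-1.
Proof.
move=> hoddM.
rewrite (c_eq _ hq) (c_eq _ hqi).
have hM1 : abs (1 + q ^+ M) = 1.
  by apply: abs1pQ; apply: le_lt_trans (absXn1 _ _ hq) hq.
have h1q : abs (1 + q) = 1 by apply: abs1pQ.
case: M hoddM hM1 => [//|M'] hoddM hM1.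
have e1 : (-1 : K) ^+ M'.+1 = -1 by rewrite -signr_odd hoddM expr1.
have e2 : (-1 : K) ^+ M' = 1.
  by move: hoddM; rewrite -signr_odd [odd _.+1]/= => /negbTE ->; rewrite expr0.
rewrite [M'.+1.-1]/=.
rewrite (exprNn q) (exprNn q) (exprNn q^-1) e1 e2 !mulN1r mul1r opprK exprVn !exprS.
rewrite exprS in hM1.
have a1 : 1 + q != 0 by apply/eqP => e; move: h1q; rewrite e abs0 => /eqP; rewrite eq_sym oner_eq0.
have a2 : 1 + q * q ^+ M' != 0 by apply/eqP => e; move: hM1; rewrite e abs0 => /eqP; rewrite eq_sym oner_eq0.
have a3 : q ^+ M' != 0 by rewrite expf_neq0 ?q0.
have a4 := q0.
move: (q ^+ M') a2 a3 => X a2 a3.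
rewrite opprK; field.
by rewrite a4 a3 addrC a1 addrC a2.
Qed.

Lemma compare N : abs (ferm_sum p q f2 N - ferm_sum p q^-1 g N) <= rr ^+ N.
Proof.
set M := (p ^ N)%N.
have M0 : (0 < M)%N by rewrite expn_gt0 prime_gt0.
have hoddM : odd M by rewrite oddX hodd orbT.
have nq0 : - q != 0 by rewrite oppr_eq0 q0.
have hterm : forall i, (i < M)%N -> f2 (M - i.+1)%N%:Z * (- q) ^+ (M - i.+1) =
    (- q) ^+ M.-1 * (g (i%:Z + (-1) * M%:Z) * (- q^-1) ^+ i).
  move=> i hi; rewrite f2_rev //.
  have -> : (M.-1 = (M - i.+1) + i)%N by lia.
  rewrite exprD -invrN exprVn.
  have : (- q) ^+ i != 0 by rewrite expf_neq0.
  move: ((- q) ^+ i) => a a0; field.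
  by rewrite a0.
rewrite /ferm_sum big_nat_rev /= add0n.
rewrite (eq_big_nat _ _ (F2 := fun i => (- q) ^+ M.-1 * (g (i%:Z + (-1) * M%:Z) * (- q^-1) ^+ i))); last first.
  by move=> i /andP [_ hi]; apply: hterm.
rewrite -big_distrr /= mulrA c_rel // -mulrBr -sumrB.
rewrite absM absV.
have -> : abs (qnum (- q^-1) M%:Z) = 1 by apply: (abs_c _ hqi).
rewrite invr1 mul1r.
apply: abs_sum => [|i _]; first by rewrite exprn_ge0 ?rr_ge0.
rewrite -mulrBl absM absX absN absV (abs_unit _ hq) invr1 expr1n mulr1.
exact: g_cont.
Qed.


End Main.

End Padic.

Theorem mainTheorem4 (R : realType) (K : closedFieldType) (abs : K -> R)
  (p : nat) (hp : prime p) (hodd : odd p)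
  (habs : padic_abs abs p) (hcomp : complete_abs abs)
  (q : K) (hq : abs (q - 1) < 1) (alpha h : nat) (hh : (0 < h)%N) (n : nat) :
  exists G : K,
    qGenocchi_is abs p q^-1 alpha h n 2 G /\
    fermionic_integral_is abs p q
      (fun xi => q ^ ((h%:Z - 1) * (xi + 1)) * (qnum (q ^- alpha) (1 - xi)) ^+ n)
      (G / (n.+1)%:R).
Proof.
have hqi' := hqi _ _ abs p habs q hq.
have r0 := rr_ge0 _ _ abs p q.
have r1 := rr_lt1 _ _ abs p hp q hq.
have hg : forall N (a j : nat), abs (g K q alpha h n (a + j * p ^ N)%N%:Z - g K q alpha h n a%:Z)
    <= rr R K abs p q ^+ N.
  by move=> N a j; rewrite PoszD PoszM; exact: (g_cont _ _ abs p hp habs q alpha h n hq).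
have [L hL] := ferm_conv _ _ abs p hp hodd habs _ hqi' _ _ r0 r1 hg hcomp.
have n0 : (n.+1)%:R != 0 :> K.
  apply/eqP => e; have := abs_nat _ _ abs p habs _ (isT : (0 < n.+1)%N).
  rewrite e (abs0 _ _ abs p habs) => /eqP; rewrite eq_sym invr_eq0 expf_eq0 pnatr_eq0 andbC.
  have hp0 : (p == 0)%N = false by apply/negbTE; rewrite -lt0n prime_gt0.
  by rewrite hp0.
exists (L * (n.+1)%:R); rewrite mulfK //.
split; first by rewrite /qGenocchi_is mulfK //; exact: hL.
move=> e e0.
have [N1 hN1] := hL e e0.
have [N2 hN2] := @geo_small _ _ e r0 r1 e0.
exists (maxn N1 N2) => m hm.
have hc := compare _ _ abs p hp hodd habs q alpha h n hq m.
have hl := hN1 m (leq_trans (leq_maxl _ _) hm).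
rewrite -(subrK (ferm_sum p q^-1 (g K q alpha h n) m) (ferm_sum p q _ m)) -addrA.
apply: (le_lt_trans (absD _ _ abs p habs _ _)); rewrite gt_max hl andbT.
apply: (le_lt_trans hc); apply: (le_lt_trans _ hN2).
exact: (@ler_wiXn2l _ _ r0 (ltW r1) _ _ (leq_trans (leq_maxr _ _) hm)).
Qed.
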